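(* Let $(V,d)$ be a $\gamma$-coherent geometry with $|V|=n$, with (H2) holding for constants $\phi>0$ and $0<\lambda<1$, let $E_0$ be a substrate for $(V,d)$, let $\theta>0$, and let $E_q$ be a random edge set sampled from a product measure $G(n,\mathbf{Q})$ that is $\theta$-uniformly rich for $(V,d)$. Then with high probability the graph $G(V,E_0\cup E_q)$ is $(\theta+1)$-reducible.
   Context: Geometry $(V,d)$: finite $V$, $d$ symmetric, nonnegative, $d(x,y)=0$ iff $x=y$. For $\gamma>1$, $K=\lceil\log_\gamma n\rceil$, $P_k(v)=\#\{u: d(v,u)\in(\gamma^{k-1},\gamma^k]\}$; for $v\ne t$, $k_{vt}$ is the integer with $d(v,t)\in(\gamma^{k_{vt}-1},\gamma^{k_{vt}}]$ and $D_\lambda(v,t)=\{u: d(v,u)\le\gamma^{k_{vt}},\ d(u,t)\le\lambda d(v,t)\}$. $(V,d)$ is $\gamma$-coherent if (H1) there are $A>1,\alpha>0$ with $\alpha\gamma^k\le P_k(v)\le A\gamma^k$ for all $v$, $k\in[K]$, and (H2) there are $\phi>0$, $0<\lambda<1$ with $|D_\lambda(v,t)|\ge\phi\gamma^{k_{vt}}$ for all $v\ne t$. Substrate: an edge set $E_0$ such that for every $s\ne t$ there is $v$ with $\{s,v\}\in E_0$ and $d(v,t)\le d(s,t)-1$; one such $v$ is fixed and called the local $t$-connection of $s$. The local $(s,t)$-path starts at $s$ and repeatedly moves to the local $t$-connection of the current vertex until reaching $t$. $G(n,\mathbf{Q})$ includes each pair $\{i,j\}$ independently with probability $Q_{ij}$.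 With $k_\theta=\frac{\theta\log\log n-\log\alpha}{\log\gamma}$, it is $\theta$-uniformly rich if there is a constant $M>0$ such that for every $k\ge k_\theta$ and every pair with $d(i,j)\in(\gamma^{k-1},\gamma^k]$, $Q_{ij}\ge\frac{1}{M\log^\theta(n)\gamma^k}$. Reducibility: a graph $G(V,E)$ is $p$-reducible if there is a constant $C>0$ such that for every pair $s\ne t$, among the first $C(\log|V|)^p$ vertices of the local $(s,t)$-path there is a vertex $u$ with an edge $\{u,v\}\in E$ such that $d(v,t)\le\lambda d(s,t)$ ($\lambda$ the constant from (H2)). ''With high probability'': probability $\to1$ as $n\to\infty$. *)

(* Defs.v *)
From HB Require Import structures.
From mathcomp Require Import all_boot all_order all_algebra.
From mathcomp Require Import all_classical all_reals all_analysis.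
Set Implicit Arguments. Unset Strict Implicit. Unset Printing Implicit Defensive.
Import Order.TTheory GRing.Theory Num.Theory.
Local Open Scope ring_scope.

Section Defs.
Context {R : realType} {n : nat}.
Implicit Types (d : 'I_n -> 'I_n -> R) (E : {set 'I_n * 'I_n}).

Definition geometry d :=
  (forall x y, d x y = d y x) /\ (forall x y, 0 <= d x y) /\
  (forall x y, d x y = 0 <-> x = y).

(* unordered edge {u,v} belongs to the edge set E (pairs stored in either order) *)
Definition adj E (u v : 'I_n) : bool := ((u, v) \in E) || ((v, u) \in E).

Definition Kcap (gamma : R) : int := Num.ceil (ln (n%:R : R) / ln gamma).

Definition Pk (gamma : R) d (v : 'I_n) (k : int) : nat :=
  #|[set u | (gamma ^ (k - 1) < d v u) && (d v u <= gamma ^ k)]|.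

Definition H1 (gamma A alpha : R) d :=
  1 < A /\ 0 < alpha /\
  forall (v : 'I_n) (k : nat), (1 <= k)%N -> (k%:Z <= Kcap gamma) ->
    alpha * gamma ^ k%:Z <= (Pk gamma d v k%:Z)%:R <= A * gamma ^ k%:Z.

(* D_lambda(v,t), where k is k_{vt} *)
Definition Dset (gamma lambda : R) d (v t : 'I_n) (k : int) : {set 'I_n} :=
  [set u | (d v u <= gamma ^ k) && (d u t <= lambda * d v t)].

(* (H2) with constants phi, lambda; k ranges over the (unique) integer k_{vt} *)
Definition H2 (gamma phi lambda : R) d :=
  0 < phi /\ 0 < lambda < 1 /\
  forall (v t : 'I_n), v != t -> forall k : int,
    gamma ^ (k - 1) < d v t <= gamma ^ k ->
    phi * gamma ^ k <= (#|Dset gamma lambda d v t k|)%:R.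

Definition coherent (gamma A alpha phi lambda : R) d :=
  1 < gamma /\ geometry d /\ H1 gamma A alpha d /\ H2 gamma phi lambda d.

(* E0 is a substrate and conn s t is the (fixed) local t-connection of s *)
Definition substrate d E (conn : 'I_n -> 'I_n -> 'I_n) :=
  forall s t : 'I_n, s != t -> adj E s (conn s t) /\ d (conn s t) t <= d s t - 1.

Definition lpath (conn : 'I_n -> 'I_n -> 'I_n) (s t : 'I_n) (k : nat) : 'I_n :=
  iter k (fun x => if x == t then t else conn x t) s.

Definition reducible_with (lambda : R) d (conn : 'I_n -> 'I_n -> 'I_n) E (C p : R) :=
  forall s t : 'I_n, s != t ->
    exists k : nat, (k.+1)%:R <= C * (ln (n%:R : R)) `^ p /\
      exists v : 'I_n, adj E (lpath conn s t k) v /\ d v t <= lambda * d s t.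

Definition prob_matrix (Q : 'I_n -> 'I_n -> R) :=
  forall i j, Q i j = Q j i /\ 0 <= Q i j <= 1.

Definition rich (gamma alpha theta M : R) d (Q : 'I_n -> 'I_n -> R) :=
  0 < M /\
  forall k : int,
    (theta * ln (ln (n%:R : R)) - ln alpha) / ln gamma <= k%:~R ->
    forall i j : 'I_n, gamma ^ (k - 1) < d i j <= gamma ^ k ->
      1 / (M * (ln (n%:R : R)) `^ theta * gamma ^ k) <= Q i j.

(* unordered pairs {i,j}, i <> j, represented as (i,j) with i < j *)
Definition upairs : {set 'I_n * 'I_n} := [set p : 'I_n * 'I_n | (val p.1 < val p.2)%N].

Definition gnq_weight (Q : 'I_n -> 'I_n -> R) E : R :=
  \prod_(p in upairs) (if p \in E then Q p.1 p.2 else 1 - Q p.1 p.2).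

Definition gnq_prob (Q : 'I_n -> 'I_n -> R) (P : {set 'I_n * 'I_n} -> Prop) : R :=
  \sum_(E : {set 'I_n * 'I_n} | (E \subset upairs) && `[< P E >]) gnq_weight Q E.

End Defs.

(* Main.v *)
Require Import Defs.
From HB Require Import structures.
From mathcomp Require Import all_boot all_order all_algebra.
From mathcomp Require Import all_classical all_reals all_analysis.
From mathcomp Require Import ring lra zify.
From mathcomp Require unstable.
Import Order.TTheory GRing.Theory Num.Theory numFieldNormedType.Exports.
Local Open Scope ring_scope.

Section Prob.
Variables (R : realType) (T : finType) (U : {set T}).

Lemma sum_subsets_prod (f : T -> bool -> R) :
  \sum_(E : {set T} | E \subset U) \prod_(p in U) f p (p \in E) =
  \prod_(p in U) (f p true + f p false).
Proof.
pose h p b := if p \in U then f p b else (if b then 0 else 1).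
have step1 : forall E : {set T},
  (if E \subset U then \prod_(p in U) f p (p \in E) else 0) = \prod_(p : T) h p (p \in E).
  move=> E; case: ifP => EU.
    rewrite [RHS](bigID (fun p => p \in U)) /= [X in _ = _ * X]big1 ?mulr1.
      by apply: eq_bigr => p pU; rewrite /h pU.
    move=> p /negbTE pU; rewrite /h pU.
    by have -> : (p \in E) = false by apply/negP => pE; move/fintype.subsetP: EU => /(_ p pE); rewrite pU.
  have [p pE pU] : exists2 p, p \in E & p \notin U.
    by move/negbT: EU => /fintype.subsetPn [p pE pU]; exists p.
  by rewrite (bigD1 p) //= /h (negbTE pU) pE mul0r.
rewrite big_mkcond /=.
under eq_bigr => E _ do rewrite step1.
have -> : \prod_(p in U) (f p true + f p false) = \prod_(p : T) (h p true + h p false).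
  rewrite [RHS](bigID (fun p => p \in U)) /= [X in _ = _ * X]big1 ?mulr1.
    by apply: eq_bigr => p pU; rewrite /h pU.
  by move=> p /negbTE pU; rewrite /h pU add0r.
have -> : \prod_(p : T) (h p true + h p false) = \prod_(p : T) \sum_(b : bool) h p b.
  apply: eq_bigr => p _; rewrite big_bool. done.
rewrite bigA_distr_bigA /=.
rewrite (reindex (fun g : {ffun T -> bool} => [set p | g p])) /=.
  by apply: eq_bigr => g _; apply: eq_bigr => p _; rewrite inE.
exists (fun E : {set T} => [ffun p => p \in E]).
  by move=> g _; apply/ffunP => p; rewrite ffunE inE.
by move=> E _; apply/setP => p; rewrite inE ffunE.
Qed.

Variable q : T -> R.
Hypothesis q01 : forall p, p \in U -> 0 <= q p <= 1.

Definition wt (E : {set T}) := \prod_(p in U) (if p \in E then q p else 1 - q p).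
Definition prb (P : {set T} -> Prop) :=
  \sum_(E : {set T} | (E \subset U) && `[< P E >]) wt E.

Lemma wt_ge0 E : 0 <= wt E.
Proof.
apply: prodr_ge0 => p pU; have /andP[q0 q1] := q01 p pU.
by case: ifP => _ //; rewrite subr_ge0.
Qed.

Lemma wt_total : \sum_(E : {set T} | E \subset U) wt E = 1.
Proof.
rewrite /wt (sum_subsets_prod (fun p b => if b then q p else 1 - q p)) /=.
by apply: big1 => p _; rewrite addrC subrK.
Qed.

Lemma prb_mkcond P : prb P = \sum_(E : {set T} | E \subset U) (if `[< P E >] then wt E else 0).
Proof. by rewrite /prb big_mkcondr. Qed.

Lemma prb_compl P : prb P = 1 - prb (fun E => ~ P E).
Proof.
rewrite !prb_mkcond -wt_total -sumrB; apply: eq_bigr => E _.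
case: (asboolP (P E)) => H; case: (asboolP (~ P E)) => H' //; rewrite ?subrr ?subr0 //.
Qed.

Lemma prb_le1 P : prb P <= 1.
Proof.
rewrite -wt_total prb_mkcond; apply: ler_sum => E _.
by case: ifP => _ //; exact: wt_ge0.
Qed.

Lemma prb_mono (P P' : {set T} -> Prop) :
  (forall E : {set T}, E \subset U -> P E -> P' E) -> prb P <= prb P'.
Proof.
move=> H; rewrite !prb_mkcond; apply: ler_sum => E EU.
case: (asboolP (P E)) => h1; case: (asboolP (P' E)) => h2 //.
- by exfalso; exact: h2 (H E EU h1).
- exact: wt_ge0.
Qed.

Lemma prb_union (I : finType) (P : {set T} -> Prop) (B : I -> {set T} -> Prop) :
  (forall E : {set T}, E \subset U -> ~ P E -> exists i, B i E) ->
  prb (fun E => ~ P E) <= \sum_(i : I) prb (B i).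
Proof.
move=> H; under [X in _ <= X]eq_bigr => i _ do rewrite prb_mkcond.
rewrite exchange_big /= prb_mkcond; apply: ler_sum => E EU.
case: (asboolP (~ P E)) => h; last first.
  by apply: sumr_ge0 => i _; case: ifP => _ //; exact: wt_ge0.
have [i0 Hi0] := H E EU h.
rewrite (bigD1 i0) //= ifT; last by apply/asboolP.
rewrite lerDl; apply: sumr_ge0 => i _; case: ifP => _ //; exact: wt_ge0.
Qed.

Lemma prb_disjoint (S : {set T}) : S \subset U ->
  prb (fun E => [disjoint E & S]) = \prod_(p in S) (1 - q p).
Proof.
move=> SU.
pose f p b := if b then (if p \in S then 0 else q p) else 1 - q p.
have H1 : forall E : {set T}, E \subset U ->
   (if `[< [disjoint E & S] >] then wt E else 0) = \prod_(p in U) f p (p \in E).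
  move=> E EU; case: (asboolP [disjoint E & S]) => hd.
    apply: eq_bigr => p pU; rewrite /f; case: ifP => // pE.
    by rewrite (disjointFr hd pE).
  have [p pE pS] : exists2 p, p \in E & p \in S.
    move/negP: hd; rewrite -setI_eq0 => /set0Pn [p]; rewrite inE => /andP[pE pS].
    by exists p.
  have pU : p \in U by move/fintype.subsetP: SU; apply.
  by rewrite (bigD1 p) //= /f pE pS mul0r.
rewrite prb_mkcond.
rewrite (eq_bigr _ H1).
rewrite sum_subsets_prod (big_setID S) /= finset.setIC (finset.setIidPl SU).
rewrite [X in _ * X]big1 ?mulr1.
  by apply: eq_bigr => p pS; rewrite /f pS add0r.
by move=> p; rewrite inE => /andP[/negbTE -> _]; rewrite addrC subrK.
Qed.

Lemma prod_exp (S : {set T}) : S \subset U ->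
  \prod_(p in S) (1 - q p) <= expR (- \sum_(p in S) q p).
Proof.
move=> SU; rewrite -sumrN expR_sum; apply: ler_prod => p pS.
have /andP[h0 h1] := q01 p (fintype.subsetP SU p pS).
by rewrite subr_ge0 h1 /= -[1 - _]addrC; have := expR_ge1Dx (- q p); rewrite addrC.
Qed.

End Prob.
Arguments prb {R T}.
Arguments wt {R T}.
Arguments prb_mono {R T U q}.
Arguments prb_disjoint {R T U q}.
Arguments prod_exp {R T U q}.
Arguments prb_union {R T U q}.
Arguments prb_compl {R T U q}.
Arguments prb_le1 {R T U q}.
Arguments prb_mkcond {R T U q}.

Section Pow.
Variables (R : realType) (g : R).
Hypothesis g1 : 1 < g.

Lemma g0 : 0 < g. Proof. by apply: lt_trans g1. Qed.
Lemma lng0 : 0 < ln g. Proof. exact: ln_gt0. Qed.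

Lemma exprzE (z : int) : g ^ z = expR (z%:~R * ln g).
Proof. by rewrite -powR_intmul ?(ltW g0) // /powR gt_eqF ?g0. Qed.

Lemma powRE' (x : R) : g `^ x = expR (x * ln g).
Proof. by rewrite /powR gt_eqF ?g0. Qed.

Definition kf (x : R) : int := Num.ceil (ln x / ln g).

Lemma kf_spec x : 0 < x -> g ^ (kf x - 1) < x <= g ^ (kf x).
Proof.
move=> x0; have := ceil_itv (ln x / ln g); rewrite -/(kf x) => /andP[h1 h2].
have hl := lng0.
rewrite !exprzE; apply/andP; split.
  by rewrite -[X in _ < X](lnK x0) ltr_expR -ltr_pdivlMr.
by rewrite -[X in X <= _](lnK x0) ler_expR -ler_pdivrMr.
Qed.

Lemma exprz_le (a b : int) : (g ^ a <= g ^ b) = (a <= b).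
Proof. exact: ler_eXz2l. Qed.
Lemma exprz_lt (a b : int) : (g ^ a < g ^ b) = (a < b).
Proof. exact: ltr_eXz2l. Qed.

Lemma geom_sum (J : nat) : (g - 1) * \sum_(j < J.+1 | (1 <= j)%N) g ^+ j = g ^+ J.+1 - g.
Proof.
rewrite big_mkcond /=.
elim: J => [|J IH]; first by rewrite big_ord1 /= mulr0 expr1 subrr.
rewrite big_ord_recr /= mulrDr IH [g ^+ J.+2]exprS.
rewrite mulrBl mul1r; lra.
Qed.

End Pow.
Arguments kf {R}.

Lemma ar1 {R : realType} {l a b c : R} : 0 < l -> l * a < b -> b <= l * c -> c <= a -> False.
Proof. move=> *; nra. Qed.
Lemma ar2 {R : realType} {r x : R} {j : nat} : 1 <= r -> x <= r - j%:R -> x <= r.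
Proof. move=> h1 h2; have : (0:R) <= j%:R by []. lra. Qed.

Lemma ar3 {R : realType} {phi y a b c x z lm : R} : phi*y <= a + b -> b <= c*x -> x <= z ->
  lm < y -> 2*c*z <= phi*lm -> 0<=c -> 0<phi -> phi*y/2 <= a.
Proof. move=> h1 h2 h3 h4 h5 h6 h7; have : c * x <= c * z by rewrite ler_wpM2l. nra. Qed.

Section Geo.
Variables (R : realType) (n : nat) (gamma A alpha phi lambda theta M : R)
 (d : 'I_n -> 'I_n -> R) (E0 : {set 'I_n * 'I_n}) (conn : 'I_n -> 'I_n -> 'I_n)
 (Q : 'I_n -> 'I_n -> R).
Hypotheses (Hcoh : coherent gamma A alpha phi lambda d) (Hsub : substrate d E0 conn).

Lemma d_ge0 x y : 0 <= d x y.
Proof. by case: Hcoh => _ [[_ [h _]] _]. Qed.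
Lemma d_sym x y : d x y = d y x.
Proof. by case: Hcoh => _ [[h _] _]. Qed.
Lemma d_eq0 x y : d x y = 0 <-> x = y.
Proof. by case: Hcoh => _ [[_ [_ h]] _]. Qed.
Lemma d_xx x : d x x = 0.
Proof. by apply/d_eq0. Qed.
Lemma lam01 : 0 < lambda < 1.
Proof. by case: Hcoh => _ [_ [_ [_ [h _]]]]. Qed.

Lemma d_ge1 x y : x != y -> 1 <= d x y.
Proof. move=> xy; have [_ h] := Hsub _ _ xy; have := d_ge0 (conn x y) y; lra. Qed.

Lemma close_adj x y : x != y -> d x y < 2 -> adj E0 x y.
Proof.
move=> xy h2; have [ha hd] := Hsub _ _ xy.
case: (eqVneq (conn x y) y) => [<-//|cy].
have := d_ge1 _ _ cy; lra.
Qed.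

Variables (s t : 'I_n).
Hypothesis st : s != t.
Let u j := lpath conn s t j.
Let r := d s t.
Variable m : nat.
Hypothesis NoDet : forall k, (k < m)%N -> forall v, adj E0 (u k) v -> lambda * r < d v t.

Lemma uS j : u j.+1 = if u j == t then t else conn (u j) t.
Proof. by []. Qed.

Lemma path_facts j : (j <= m)%N ->
  [/\ u j != t, lambda * r < d (u j) t & d (u j) t <= r - j%:R].
Proof.
have [l0 l1] := andP lam01.
have r1 : 1 <= r by apply: d_ge1.
elim: j => [_|j IH jm].
  by rewrite /u /lpath /= st subr0; split => //; rewrite -/r; nra.
have [ut hl hr] := IH (ltnW jm).
have hu : u j.+1 = conn (u j) t by rewrite uS (negbTE ut).
have [ha hd] := Hsub _ _ ut.
have hlt : lambda * r < d (u j.+1) t by rewrite hu; exact: NoDet jm _ ha.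
split => //.
  by apply/eqP => e; move: hlt; rewrite e d_xx; nra.
by rewrite hu -natr1 /=; move: hd; rewrite -/(u j) ; lra.
Qed.


Lemma m_lt_r : m%:R < r.
Proof.
have [_ h1 h2] := path_facts _ (leqnn m).
have [l0 l1] := andP lam01.
have r1 : 1 <= r by apply: d_ge1.
nra.
Qed.

Lemma u_dec j i : (j + i <= m)%N -> d (u (j + i)) t <= d (u j) t - i%:R.
Proof.
elim: i => [|i IH] h; first by rewrite addn0 subr0.
have h' : (j + i <= m)%N by apply: leq_trans h; rewrite addnS.
have [ut _ _] := path_facts _ h'.
have hu : u (j + i.+1) = conn (u (j + i)) t by rewrite addnS uS (negbTE ut).
have [_ hd] := Hsub _ _ ut.
have := IH h'.
by rewrite hu -natr1; lra.
Qed.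

Lemma u_inj : injective (fun j : 'I_m => u j).
Proof.
suff H : forall j j' : 'I_m, (j < j')%N -> u j != u j'.
  move=> j j' e; apply/val_inj => /=; case: (ltngtP j j') => // [/H|/H].
    by rewrite e eqxx.
  by rewrite e eqxx.
move=> j j' jj'.
have h := u_dec j (j' - j); rewrite subnKC ?(ltnW jj') // in h.
have := h (ltnW (ltn_ord j')).
have : (0 < j' - j)%N by rewrite subn_gt0.
rewrite -(ltr0n R) => hp hh; apply/eqP => e; move: hh; rewrite e; lra.
Qed.


Lemma g1 : 1 < gamma. Proof. by case: Hcoh. Qed.
Lemma H1' : forall (v : 'I_n) (k : nat), (1 <= k)%N -> (k%:Z <= @Kcap R n gamma) ->
    alpha * gamma ^ k%:Z <= (Pk gamma d v k%:Z)%:R <= A * gamma ^ k%:Z.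
Proof. by case: Hcoh => _ [_ [[_ [_ h]] _]]. Qed.
Lemma alpha0 : 0 < alpha. Proof. by case: Hcoh => _ [_ [[_ [h _]] _]]. Qed.
Lemma A1 : 1 < A. Proof. by case: Hcoh => _ [_ [[h _] _]]. Qed.
Lemma H2' : forall (v t : 'I_n), v != t -> forall k : int,
    gamma ^ (k - 1) < d v t <= gamma ^ k ->
    phi * gamma ^ k <= (#|Dset gamma lambda d v t k|)%:R.
Proof. by case: Hcoh => _ [_ [_ [_ [_ h]]]]. Qed.

Let L := ln (n%:R : R).
Hypothesis L0 : 0 < L.
Let kth := (theta * ln L - ln alpha) / ln gamma.
Hypotheses (Hk0 : 0 <= kth) (HkK : kth <= L / ln gamma).
Let Jn := Num.truncn kth.

Lemma Jn_le : Jn%:R <= kth.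
Proof. by rewrite truncn_le. Qed.

Lemma close_card (w : 'I_n) :
  (#|[set v | (1 < d w v) && (d w v <= gamma ^ (Jn%:Z))]|)%:R
    <= A * gamma / (gamma - 1) * gamma ^+ Jn.
Proof.
have G1 := g1.
set Cl := [set v | _].
pose sh (j : nat) := [set v | (gamma ^ (j%:Z - 1) < d w v) && (d w v <= gamma ^ j%:Z)].
have sub : Cl \subset \bigcup_(j < Jn.+1 | (1 <= j)%N) sh j.
  apply/fintype.subsetP => v; rewrite inE => /andP[h1 h2].
  have dp : 0 < d w v by apply: lt_trans h1.
  have /andP[k1 k2] := @kf_spec _ _ G1 _ dp.
  have kpos : 0 < kf gamma (d w v).
    rewrite -(@exprz_lt _ _ G1) expr0z; exact: lt_le_trans h1 k2.
  have kle : kf gamma (d w v) <= Jn%:Z.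
    have : kf gamma (d w v) - 1 < Jn%:Z.
      rewrite -(@exprz_lt _ _ G1); exact: lt_le_trans k1 h2.
    by rewrite ltrBlDr -ltzD1.
  have [kn ek] : exists kn : nat, kf gamma (d w v) = kn%:Z.
    by exists `|kf gamma (d w v)|%N; rewrite gez0_abs // ltW.
  have kJ : (kn < Jn.+1)%N by rewrite ltnS -lez_nat -ek.
  apply/finset.bigcupP; exists (Ordinal kJ) => /=.
    by rewrite -ltz_nat -ek kpos.
  by rewrite inE -ek k1 k2.
have hc := leq_trans (subset_leq_card sub) (unstable.card_big_setU _ _ _).
have hJK : forall j, (j <= Jn)%N -> j%:Z <= @Kcap R n gamma.
  move=> j hj; rewrite /Kcap -(ler_int R) .
  apply: le_trans (ceil_ge _); apply: le_trans HkK; apply: le_trans Jn_le.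
  by rewrite ler_nat.
apply: (le_trans (y := \sum_(j < Jn.+1 | (1 <= j)%N) (#|sh j|)%:R)).
  by rewrite -natr_sum ler_nat.
apply: (le_trans (y := \sum_(j < Jn.+1 | (1 <= j)%N) A * gamma ^+ j)).
  apply: ler_sum => j j1.
  by have /andP[_ ->] := H1' w j j1 (hJK j (ltn_ord j)).
rewrite -mulr_sumr.
have gg : 0 < gamma - 1 by rewrite subr_gt0.
have hs : \sum_(j < Jn.+1 | (1 <= j)%N) gamma ^+ j = (gamma ^+ Jn.+1 - gamma) / (gamma - 1).
  by rewrite -(@geom_sum _ gamma Jn) mulrAC divff ?mul1r // gt_eqF.
rewrite hs exprS.
have A0 : 0 < A by apply: lt_trans A1.
have gJ : 0 < gamma ^+ Jn by apply: exprn_gt0; apply: lt_trans G1.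
rewrite mulrA [A * gamma / (gamma - 1) * _]mulrC !mulrA ler_pM2r ?invr_gt0 //.
have g0' : 0 < gamma by apply: lt_trans G1.
move: (gamma ^+ Jn) gJ => x hx.
have -> : x * A * gamma = A * (gamma * x) by ring.
by rewrite ler_pM2l // lerBlDr lerDl ltW.
Qed.


Lemma gJ_bound : gamma ^+ Jn <= L `^ theta / alpha.
Proof.
have G1 := g1; have a0 := alpha0.
rewrite -powR_mulrn; last by apply: ltW; apply: lt_trans G1.
apply: (le_trans (y := gamma `^ kth)).
  by apply: ler_powR; [exact: ltW | exact: Jn_le].
rewrite (@powRE' _ _ G1) /kth mulfVK; last by rewrite gt_eqF // ln_gt0.
rewrite expRB lnK ?posrE // /powR gt_eqF //.
Qed.

Hypothesis HQ : prob_matrix Q.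
Hypothesis Hrich : rich gamma alpha theta M d Q.
Lemma M0 : 0 < M. Proof. by case: Hrich. Qed.

Let Dk (w : 'I_n) := kf gamma (d w t).
Let Bs (w : 'I_n) := [set v | gamma ^ (Jn%:Z) < d w v].
Let Dp (w : 'I_n) := Dset gamma lambda d w t (Dk w) :&: Bs w.

Lemma Q_lb j v : (j < m)%N -> v \in Dp (u j) ->
  1 / (M * L `^ theta * gamma ^ (Dk (u j))) <= Q (u j) v.
Proof.
move=> jm; rewrite !inE => /andP[/andP[hk _] hJ].
have G1 := g1.
have dp : 0 < d (u j) v by apply: le_lt_trans _ hJ; apply: exprz_ge0; apply: ltW; apply: lt_trans G1.
have /andP[k1 k2] := @kf_spec _ _ G1 _ dp.
set j' := kf gamma (d (u j) v) in k1 k2.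
have hJj : Jn%:Z < j' by rewrite -(@exprz_lt _ _ G1); apply: lt_le_trans hJ k2.
have hjk : j' <= Dk (u j).
  have : j' - 1 < Dk (u j) by rewrite -(@exprz_lt _ _ G1); apply: lt_le_trans k1 hk.
  by rewrite ltrBlDr -ltzD1.
have hth : kth <= j'%:~R.
  apply: ltW; apply: lt_le_trans (truncnS_gt kth) _.
  rewrite -/Jn; move: (Jn) hJj => J hJJ.
  have h : (J.+1)%:Z <= j' by lia.
  by move: h; rewrite -(ler_int R).
case: Hrich => M0' HR.
have := HR j' hth (u j) v; rewrite k1 k2 => /(_ isT) h.
apply: le_trans h.
have hL : 0 < L `^ theta by apply: powR_gt0.
have g0' : 0 < gamma by apply: lt_trans G1.
rewrite !div1r lef_pV2 ?posrE ?mulr_gt0 ?exprz_gt0 //.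
by rewrite ler_pM2l ?mulr_gt0 // (@exprz_le _ _ G1).
Qed.


Hypothesis Hm : 2 * (A * gamma / (gamma - 1)) * (L `^ theta / alpha) <= phi * lambda * m%:R.

Lemma Dp_card j : (j < m)%N -> phi * gamma ^ (Dk (u j)) / 2 <= (#|Dp (u j)|)%:R.
Proof.
move=> jm.
have G1 := g1.
have [l0 l1] := andP lam01.
have [wt hl hr] := path_facts _ (ltnW jm).
set w := u j in wt hl hr *.
have r1 : 1 <= r by apply: d_ge1.
have dwt : 0 < d w t by apply: le_lt_trans hl; apply: mulr_ge0; [exact: ltW|lra].
have /andP[k1 k2] := @kf_spec _ _ G1 _ dwt.
have hD := H2' _ _ wt (Dk w); rewrite /Dk k1 k2 in hD; have {hD} hD := hD isT.
rewrite -/(Dk w) in hD k1 k2.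
have hc := cardsID (Bs w) (Dset gamma lambda d w t (Dk w)).
have sub : Dset gamma lambda d w t (Dk w) :\: Bs w \subset
   [set v | (1 < d w v) && (d w v <= gamma ^ (Jn%:Z))].
  apply/fintype.subsetP => v; rewrite !inE => /andP[hB /andP[hv1 hv2]].
  rewrite -leNgt in hB; rewrite hB andbT.
  have vt : d v t < d w t by apply: le_lt_trans hv2 _; rewrite gtr_pMl.
  have vw : w != v by apply/eqP => e; move: vt; rewrite e ltxx.
  have nadj : ~~ adj E0 w v.
    apply/negP => /(NoDet _ jm) h.
    exact: (ar1 l0 h hv2 (ar2 r1 hr)).
  have : ~ d w v < 2 by move=> h; move/negP: nadj; apply; apply: close_adj.
  by move/negP; rewrite -leNgt; apply: lt_le_trans; rewrite ltr1n.
have hcl : (#|Dset gamma lambda d w t (Dk w) :\: Bs w|)%:R <= A * gamma / (gamma - 1) * gamma ^+ Jn.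
  by apply: le_trans (close_card w); rewrite ler_nat; exact: subset_leq_card sub.
have gJ := gJ_bound.
have gk : lambda * m%:R < gamma ^ Dk w.
  apply: lt_le_trans k2; apply: lt_trans hl; rewrite ltr_pM2l //; exact: m_lt_r.
have p0 : 0 < phi by case: Hcoh => _ [_ [_ [h _]]].
have c0 : 0 <= A * gamma / (gamma - 1).
  have A0 : 0 < A by apply: lt_trans A1.
  have g0' : 0 < gamma by apply: lt_trans G1.
  apply: divr_ge0; first by apply: mulr_ge0; apply: ltW.
  by rewrite subr_ge0 ltW.
move/(congr1 (fun x : nat => x%:R : R)): hc; rewrite natrD => hc.
rewrite -hc in hD.
have Hm' : 2 * (A * gamma / (gamma - 1)) * (L `^ theta / alpha) <= phi * (lambda * m%:R).
  by rewrite [phi * (_ * _)]mulrA.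
exact: (ar3 hD hcl gJ gk Hm' c0 p0).
Qed.


Let Pset := [set u j | j : 'I_m].
Let X := [set p : 'I_n * 'I_n | (p.1 \in Pset) && (p.2 \in Dp p.1)].
Let nrm (p : 'I_n * 'I_n) := if (val p.1 < val p.2)%N then p else (p.2, p.1).
Let S := nrm @: X.

Lemma memX p : (p \in X) = (p.1 \in Pset) && (p.2 \in Dp p.1).
Proof. by rewrite [LHS]inE. Qed.

Lemma inPset w : w \in Pset -> exists2 j, (j < m)%N & w = u j.
Proof. by case/imsetP => j _ ->; exists j. Qed.

Lemma Dp_le j v : (j < m)%N -> v \in Dp (u j) -> d v t <= lambda * r.
Proof.
move=> jm; rewrite !inE => /andP[/andP[_ h] _].
have [l0 l1] := andP lam01.
have r1 : 1 <= r by apply: d_ge1.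
have [_ _ hr] := path_facts _ (ltnW jm).
apply: le_trans h _; rewrite ler_pM2l //; exact: ar2 r1 hr.
Qed.

Lemma Pset_gt w : w \in Pset -> lambda * r < d w t.
Proof. by case/inPset => j jm ->; have [] := path_facts _ (ltnW jm). Qed.

Lemma X_neq p : p \in X -> p.1 != p.2.
Proof.
rewrite memX => /andP[/inPset [j jm e] h]; rewrite e in h.
apply/eqP => e'.
have [_ h1 _] := path_facts _ (ltnW jm).
have h2 := Dp_le _ _ jm h; rewrite -e' e in h2.
by move: (lt_le_trans h1 h2); rewrite ltxx.
Qed.

Lemma S_sub : S \subset upairs.
Proof.
apply/fintype.subsetP => p /imsetP [p0 p0X ->]; rewrite inE /nrm.
have := X_neq _ p0X; case: p0 {p0X} => a b /= ab.
case: ifP => //= /negbT; rewrite -leqNgt leq_eqVlt => /orP[/eqP e|//].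
by move: ab; rewrite (val_inj e) eqxx.
Qed.

Lemma nrm_inj : {in X &, injective nrm}.
Proof.
have key : forall p p' : 'I_n * 'I_n, p \in X -> p' \in X -> p = (p'.2, p'.1) -> False.
  move=> [a b] [a' b'] pX p'X [e1 e2].
  move: pX p'X; rewrite !memX /= => /andP[ha _] /andP[/inPset [j jm ej] hb'].
  have := Pset_gt _ ha; rewrite e1; move: hb'; rewrite ej => hb' h.
  by have := lt_le_trans h (Dp_le _ _ jm hb'); rewrite ltxx.
move=> [a b] [a' b'] pX p'X; rewrite /nrm /=.
case: ifP => h1; case: ifP => h2 // e.
- by exfalso; apply: (key _ _ pX p'X); rewrite e.
- by exfalso; apply: (key _ _ pX p'X); case: e => -> ->.
- by case: e => -> ->.
Qed.

Lemma bad_disj (E : {set 'I_n * 'I_n}) :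
  (forall k, (k < m)%N -> forall v, adj (E0 :|: E) (u k) v -> lambda * r < d v t) ->
  [disjoint E & S].
Proof.
move=> B; rewrite -setI_eq0; apply/eqP/setP => p; rewrite !inE.
apply/negP => /andP[pE /imsetP [[a b] abX ep]].
move: (abX); rewrite memX /= => /andP[/inPset [j jm ej] hb].
have hadj : adj (E0 :|: E) a b.
  rewrite /adj !inE; move: ep; rewrite /nrm /=; case: ifP => _ <-; by rewrite pE !orbT.
rewrite ej in hadj hb; have := B j jm b hadj.
by move=> h; have := lt_le_trans h (Dp_le _ _ jm hb); rewrite ltxx.
Qed.

Lemma sum_S :
  \sum_(p in S) Q p.1 p.2 = \sum_(w in Pset) \sum_(v in Dp w) Q w v.
Proof.
rewrite big_imset /=; last exact: nrm_inj.
rewrite (eq_bigr (fun p => Q p.1 p.2)); last first.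
  move=> [a b] _; rewrite /nrm /=; case: ifP => //= _.
  by case: (HQ a b) => ->.
rewrite pair_big_dep /=; apply: eq_bigl => p; by rewrite inE.
Qed.

Lemma card_Pset : #|Pset| = m.
Proof. by rewrite card_imset ?card_ord //; exact: u_inj. Qed.

Lemma sum_lb : m%:R * (phi / (2 * M * L `^ theta)) <= \sum_(p in S) Q p.1 p.2.
Proof.
rewrite sum_S -card_Pset (mulr_natl (phi / (2 * M * L `^ theta)) #|Pset|) -sumr_const; apply: ler_sum => w /inPset [j jm ->].
have hL : 0 < L `^ theta by apply: powR_gt0.
have M0' := M0.
have G1 := g1.
have gk : 0 < gamma ^ Dk (u j) by apply: exprz_gt0; apply: lt_trans G1.
apply: (le_trans (y := \sum_(v in Dp (u j)) 1 / (M * L `^ theta * gamma ^ (Dk (u j))))).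
  rewrite sumr_const -[_ *+ #|_|]mulr_natr.
  have hc := Dp_card _ jm.
  move: hc gk hL M0'; move: (gamma ^ Dk (u j)) (L `^ theta) (#|Dp (u j)|%:R) => y z c hc hy hz hM.
  have k0 : 0 <= 1 / (M * z * y) by rewrite div1r invr_ge0 ltW // !mulr_gt0.
  apply: le_trans _ (ler_wpM2l k0 hc).
  rewrite le_eqVlt; apply/orP; left; apply/eqP.
  have hM0 : M != 0 by rewrite gt_eqF.
  have hz0 : z != 0 by rewrite gt_eqF.
  have hy0 : y != 0 by rewrite gt_eqF.
  field; by rewrite hM0 hz0 hy0.
by apply: ler_sum => v hv; exact: Q_lb _ _ jm hv.
Qed.


Lemma Q01 : forall p, p \in upairs -> 0 <= Q p.1 p.2 <= 1.
Proof. by move=> p _; case: (HQ p.1 p.2). Qed.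

Lemma pair_bound :
  prb upairs (fun p => Q p.1 p.2)
    (fun E => forall k, (k < m)%N -> forall v, adj (E0 :|: E) (u k) v -> lambda * r < d v t)
  <= expR (- (m%:R * (phi / (2 * M * L `^ theta)))).
Proof.
apply: le_trans (prb_mono Q01 _ (fun E => [disjoint E & S]) _) _.
  by move=> E _; exact: bad_disj.
rewrite prb_disjoint //; last exact: S_sub.
apply: le_trans (prod_exp Q01 _ S_sub) _.
by rewrite ler_expR lerN2; exact: sum_lb.
Qed.

End Geo.

Lemma prb_false {R : realType} {T : finType} (U : {set T}) (q : T -> R) :
  prb U q (fun _ => False) = 0.
Proof. by rewrite prb_mkcond; apply: big1 => E _; case: asboolP. Qed.

Section Main.
Variables (R : realType) (n : nat) (gamma A alpha phi lambda theta M C : R)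
 (d : 'I_n -> 'I_n -> R) (E0 : {set 'I_n * 'I_n}) (conn : 'I_n -> 'I_n -> 'I_n)
 (Q : 'I_n -> 'I_n -> R).
Hypotheses (Hcoh : coherent gamma A alpha phi lambda d) (Hsub : substrate d E0 conn)
  (HQ : prob_matrix Q) (Hrich : rich gamma alpha theta M d Q).
Let L := ln (n%:R : R).
Let kth := (theta * ln L - ln alpha) / ln gamma.
Let Xr := C * L `^ (theta + 1).
Let m := Num.truncn Xr.
Hypotheses (L0 : 0 < L) (Hk0 : 0 <= kth) (HkK : kth <= L / ln gamma)
  (Hm : 2 * (A * gamma / (gamma - 1)) * (L `^ theta / alpha) <= phi * lambda * m%:R).

Let Red (s t : 'I_n) (E : {set 'I_n * 'I_n}) := exists k : nat, (k.+1)%:R <= Xr /\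
  exists v : 'I_n, adj (E0 :|: E) (lpath conn s t k) v /\ d v t <= lambda * d s t.

Lemma adj_mono (E E' : {set 'I_n * 'I_n}) a b : E \subset E' -> adj E a b -> adj E' a b.
Proof.
move=> sub; rewrite /adj => /orP[h|h]; apply/orP; [left|right]; exact: (fintype.subsetP sub).
Qed.

Lemma red_bound :
  1 - (n * n)%:R * expR (- (m%:R * (phi / (2 * M * L `^ theta)))) <=
  gnq_prob Q (fun Eq => reducible_with lambda d conn (E0 :|: Eq) C (theta + 1)).
Proof.
have Q01 : forall p, p \in upairs -> 0 <= Q p.1 p.2 <= 1.
  by move=> p _; case: (HQ p.1 p.2).
change (gnq_prob Q _) with (prb upairs (fun p => Q p.1 p.2)
   (fun Eq => reducible_with lambda d conn (E0 :|: Eq) C (theta + 1))).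
rewrite prb_compl lerD2l lerN2.
apply: le_trans (prb_union Q01 _ _ (fun (st : 'I_n * 'I_n) E => st.1 != st.2 /\ ~ Red st.1 st.2 E) _) _.
  move=> E _ nR; apply: contrapT => nEx; apply: nR => s t st.
  apply: contrapT => nr; apply: nEx; exists (s, t); split => //.
have -> : (n * n)%:R * expR (- (m%:R * (phi / (2 * M * L `^ theta)))) =
   \sum_(i : 'I_n * 'I_n) expR (- (m%:R * (phi / (2 * M * L `^ theta)))).
  by rewrite sumr_const card_prod card_ord mulr_natl.
apply: ler_sum => [[s t]] _ /=.
case: (eqVneq s t) => [<-|st].
  apply: le_trans (prb_mono Q01 _ (fun _ => False) _) _.
    by move=> E _ [/eqP].
  by rewrite prb_false expR_ge0.
have [ND|nND] := pselect (forall k, (k < m)%N -> forall v,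
   adj E0 ([eta lpath conn s t] k) v -> lambda * d s t < d v t).
  apply: le_trans _ (@pair_bound _ _ _ _ _ _ _ _ _ _ _ _ _ Hcoh Hsub _ _ st _ ND L0 Hk0 HkK HQ Hrich Hm).
  apply: prb_mono Q01 _ _ _ => E _ [_ nr] k km v hadj.
  rewrite ltNge; apply/negP => h; apply: nr; exists k; split => //.
    by rewrite -truncn_gt_nat.
  by exists v.
apply: le_trans (prb_mono Q01 _ (fun _ => False) _) _; last by rewrite prb_false expR_ge0.
move=> E _ [_ nr]; apply: nND => k km v hadj.
rewrite ltNge; apply/negP => h; apply: nr; exists k; split.
  by rewrite -truncn_gt_nat.
exists v; split => //; apply: adj_mono hadj; exact: finset.subsetUl.
Qed.

End Main.

Lemma numc {R : realType} {phi lambda C c2 L P mm : R} : 0 < phi -> 0 < lambda -> 0 < C -> 0 <= c2 ->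
  1 <= P -> (phi*lambda + c2)/(phi*lambda*C) <= L -> C * (P * L) < mm + 1 -> c2 * P <= phi * lambda * mm.
Proof.
move=> p0 l0 C0 c0 P1 hL hm.
have pl : 0 < phi * lambda * C by rewrite !mulr_gt0.
rewrite ler_pdivrMr // in hL.
have pl' : 0 < phi * lambda by rewrite mulr_gt0.
nra.
Qed.

Lemma numd {R : realType} {phi M C L P mm : R} : 0 < phi -> 0 < M -> C = 6 * M / phi -> 1 <= P ->
  C * (P * L) < mm + 1 -> - (mm * (phi / (2 * M * P))) <= phi / (2 * M) - 3 * L.
Proof.
move=> p0 M0 eC P1 hm.
have P0 : 0 < P by apply: lt_le_trans P1.
set k := phi / (2 * M * P).
have k0 : 0 < k by rewrite /k divr_gt0 // !mulr_gt0.
have e : C * (P * L) * k = 3 * L.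
  rewrite /k eC; field; rewrite !gt_eqF //.
have kle : k <= phi / (2 * M).
  have z0 : 0 <= phi / (2 * M) by rewrite divr_ge0 // ltW // mulr_gt0.
  rewrite /k invfM mulrA ler_pdivrMr //; move: (phi / (2 * M)) z0 => z hz; nra.
have : (C * (P * L) - 1) * k <= mm * k by rewrite ler_pM2r //; lra.
rewrite mulrBl e mul1r; lra.
Qed.

Local Open Scope classical_set_scope.
Local Open Scope ring_scope.

Lemma cvg_squeeze (R : realType) (p : nat -> R) (K : R) (N : nat) : 0 <= K ->
  (forall n, (N <= n)%N -> 1 - K / n%:R <= p n <= 1) -> p @ \oo --> (1 : R).
Proof.
move=> K0 H; apply/cvgrPdist_le => e e0.
exists (maxn (maxn N 1) (Num.truncn (K / e)).+1) => // k /=.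
rewrite !geq_max => /andP[/andP[kN k1] kK].
have /andP[h1 h2] := H k kN.
have kpos : 0 < (k%:R : R) by rewrite ltr0n.
have hK : K / e < k%:R.
  by apply: lt_le_trans (truncnS_gt _) _; rewrite ler_nat.
have : K / k%:R <= e.
  rewrite ler_pdivrMr // mulrC -ler_pdivrMr //; exact: ltW.
rewrite ger0_norm ?subr_ge0 //; lra.
Qed.

Local Open Scope classical_set_scope.
Local Open Scope ring_scope.

Theorem lemma3 (R : realType) (gamma A alpha phi lambda theta M : R) (N0 : nat)
  (d : forall n : nat, 'I_n -> 'I_n -> R)
  (E0 : forall n : nat, {set 'I_n * 'I_n})
  (conn : forall n : nat, 'I_n -> 'I_n -> 'I_n)
  (Q : forall n : nat, 'I_n -> 'I_n -> R) :
  0 < theta ->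
  (forall n : nat, (N0 <= n)%N ->
     [/\ coherent gamma A alpha phi lambda (d n),
         substrate (d n) (E0 n) (conn n),
         prob_matrix (Q n)
       & rich gamma alpha theta M (d n) (Q n)]) ->
  exists C : R, 0 < C /\
    (fun n : nat =>
       gnq_prob (Q n)
         (fun Eq => reducible_with lambda (d n) (conn n) (E0 n :|: Eq) C (theta + 1)))
    @ \oo --> (1 : R).
Proof.
move=> th0 H.
have [Hc0 _ _ Hr0] := H N0 (leqnn N0).
have G1 : 1 < gamma by case: Hc0.
have [A1 a0] : 1 < A /\ 0 < alpha by case: Hc0 => _ [_ [[h1 [h2 _]] _]].
have p0 : 0 < phi by case: Hc0 => _ [_ [_ [h _]]].
have /andP[l0 l1] : 0 < lambda < 1 by case: Hc0 => _ [_ [_ [_ [h _]]]].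
have M0 : 0 < M by case: Hr0.
have g0 : 0 < gamma by apply: lt_trans G1.
have lg0 : 0 < ln gamma by apply: ln_gt0.
pose C := 6 * M / phi.
have C0 : 0 < C by rewrite /C divr_gt0 // mulr_gt0.
exists C; split => //.
pose c2 := 2 * (A * gamma / (gamma - 1)) / alpha.
have c20 : 0 <= c2.
  have A0 : 0 < A by apply: lt_trans A1.
  have gm : 0 < gamma - 1 by rewrite subr_gt0.
  rewrite /c2; apply: divr_ge0; last exact: ltW.
  apply: mulr_ge0 => //; apply: divr_ge0; last exact: ltW.
  by apply: mulr_ge0; apply: ltW.
pose L0 := Num.max 1 (Num.max (expR (ln alpha / theta))
   (Num.max (2 * (theta * ln (2 * theta) - ln alpha)) ((phi*lambda + c2)/(phi*lambda*C)))).
pose K := expR (phi / (2 * M)).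
pose N := maxn N0 (maxn 2 (Num.truncn (expR L0)).+1).
apply: (@cvg_squeeze _ _ K N); first exact: expR_ge0.
move=> n; rewrite !geq_max => /andP[hN0 /andP[hn2 hnL]].
have [Hc Hs HQ Hr] := H n hN0.
have npos : 0 < (n%:R : R) by rewrite ltr0n; apply: leq_trans hn2.
have hL0 : L0 <= ln (n%:R : R).
  rewrite -[L0]expRK ler_ln ?posrE ?expR_gt0 //.
  by apply: ltW; apply: lt_le_trans (truncnS_gt _) _; rewrite ler_nat.
move: hL0; rewrite /L0 !ge_max => /and4P[L1 La Lb Lc].
pose L := ln (n%:R : R).
have Lpos : 0 < L by apply: lt_le_trans L1.
have P1 : 1 <= L `^ theta.
  by rewrite -(powRr0 L); apply: ler_powR => //; apply: ltW.
have Hk0 : 0 <= (theta * ln L - ln alpha) / ln gamma.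
  rewrite divr_ge0 ?(ltW lg0) // subr_ge0.
  have : ln alpha / theta <= ln L.
    by rewrite -[ln alpha / theta]expRK ler_ln ?posrE ?expR_gt0.
  by rewrite ler_pdivrMr // mulrC.
have HkK : (theta * ln L - ln alpha) / ln gamma <= L / ln gamma.
  rewrite ler_pM2r ?invr_gt0 //.
  have t2 : 0 < 2 * theta by rewrite mulr_gt0.
  have h1 := ln_sublinear (divr_gt0 Lpos t2).
  rewrite ln_div ?posrE // in h1.
  have h2 : theta * (ln L - ln (2 * theta)) < theta * (L / (2 * theta)) by rewrite ltr_pM2l.
  have e : theta * (L / (2 * theta)) = L / 2 by field; rewrite gt_eqF.
  rewrite e in h2.
  move: h2 Lb; rewrite -/L mulrBr; move: (theta * ln L) (theta * ln (2 * theta)) => x y; lra.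
pose m := Num.truncn (C * L `^ (theta + 1)).
have eP : L `^ (theta + 1) = L `^ theta * L.
  rewrite powRD; last by apply/implyP => _; rewrite gt_eqF.
  by rewrite powRr1 // ltW.
have hm : C * (L `^ theta * L) < m%:R + 1.
  by rewrite -eP natr1; exact: truncnS_gt.
have Hm : 2 * (A * gamma / (gamma - 1)) * (L `^ theta / alpha) <= phi * lambda * m%:R.
  have := numc p0 l0 C0 c20 P1 Lc hm.
  by rewrite /c2 mulrA [_ / alpha * _]mulrAC -mulrA.
apply/andP; split; last first.
  have Q01 : forall p, p \in upairs -> 0 <= Q n p.1 p.2 <= 1.
    by move=> p _; case: (HQ p.1 p.2).
  exact: (prb_le1 Q01).
apply: le_trans _ (@red_bound _ _ _ _ _ _ _ _ _ C _ _ _ _ Hc Hs HQ Hr Lpos Hk0 HkK Hm).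
rewrite lerD2l lerN2.
have hd := numd p0 M0 (erefl C) P1 hm.
have eK : expR (phi / (2 * M) - 3 * L) = K * (n%:R ^+ 3)^-1.
  rewrite expRD expRN /K; congr (_ * _^-1).
  by rewrite -[3]/(3%:R) expRM_natl lnK ?posrE.
apply: (le_trans (y := (n * n)%:R * (K * (n%:R ^+ 3)^-1))).
  rewrite ler_wpM2l ?ler0n // -eK ler_expR; exact: hd.
rewrite natrM; move: npos; move: (n%:R : R) => x x0.
have : x != 0 by rewrite gt_eqF.
move=> hx; rewrite le_eqVlt; apply/orP; left; apply/eqP; field; exact: hx.
Qed.
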